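(* Let $I$ be an index set and $(p_i)_{i\in I}$ pairwise distinct complex parameters with associated variables $\xi_{p_i}$, and let $B_{p_ip_j}$ ($i\neq j$) be smooth scalar functions of all the $\xi_{p_i}$. With $\mathcal L_{abc}$ as defined below, consider the 3-form $\mathsf L=\sum_{i,j,k\in I,\ \text{distinct}}\mathcal L_{p_ip_jp_k}\,d\xi_{p_i}\wedge d\xi_{p_j}\wedge d\xi_{p_k}$. Then $d\mathsf L=\sum_{i,j,k,l\in I}\mathcal A_{p_ip_jp_kp_l}\,d\xi_{p_i}\wedge d\xi_{p_j}\wedge d\xi_{p_k}\wedge d\xi_{p_l}$ where each coefficient $\mathcal A$ for four distinct labels is a sum of products of two factors of the form $\Gamma_{a;bc}=\partial_{\xi_a}B_{bc}-B_{ba}B_{ac}$ (with $a,b,c$ among the four labels); hence $d\mathsf L$ has a double zero on solutions of the system $\partial_{\xi_a}B_{bc}=B_{ba}B_{ac}$ (all distinct $a,b,c$), and $d\mathsf L=0$ on such solutions.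
   Context: For pairwise distinct labels $a,b,c$: $\mathcal L_{abc}=\tfrac12(B_{cb}\partial_aB_{bc}-B_{bc}\partial_aB_{cb})+\tfrac12(B_{ba}\partial_cB_{ab}-B_{ab}\partial_cB_{ba})+\tfrac12(B_{ac}\partial_bB_{ca}-B_{ca}\partial_bB_{ac})+B_{ca}B_{ab}B_{bc}-B_{cb}B_{ba}B_{ac}$, with $\partial_a=\partial/\partial\xi_a$. (This $\mathcal L_{abc}$ is totally antisymmetric in $a,b,c$.) *)

(* Defs.v *)
From HB Require Import structures.
From mathcomp Require Import all_boot all_order all_algebra all_fingroup.
From mathcomp Require Import all_classical all_reals all_analysis.
Set Implicit Arguments. Unset Strict Implicit. Unset Printing Implicit Defensive.
Import Order.TTheory GRing.Theory Num.Theory.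
Import numFieldNormedType.Exports.
Local Open Scope ring_scope.

Section Defs.
Variables (R : realType) (n : nat).

(* coordinate direction e_a in R^n (variables xi_0 .. xi_{n-1}) *)
Definition dir (a : 'I_n) : 'rV[R]_n := \row_j (j == a)%:R.

Definition pd (a : 'I_n) (f : 'rV[R]_n -> R) : 'rV[R]_n -> R :=
  fun x => derive f x (dir a).

Definition iter_pd (l : seq 'I_n) (f : 'rV[R]_n -> R) : 'rV[R]_n -> R :=
  foldr pd f l.

Definition smooth (f : 'rV[R]_n -> R) : Prop :=
  forall l : seq 'I_n,
    (forall (x : 'rV[R]_n) (a : 'I_n), derivable (iter_pd l f) x (dir a)) /\
    continuous (iter_pd l f).

Definition distinct3 (a b c : 'I_n) : bool := [&& a != b, a != c & b != c].
Definition distinct4 (a b c d : 'I_n) : bool :=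
  [&& distinct3 a b c, a != d, b != d & c != d].

Variable B : 'I_n -> 'I_n -> 'rV[R]_n -> R.

Definition Lcal (a b c : 'I_n) (x : 'rV[R]_n) : R :=
  2^-1 * (B c b x * pd a (B b c) x - B b c x * pd a (B c b) x)
+ 2^-1 * (B b a x * pd c (B a b) x - B a b x * pd c (B b a) x)
+ 2^-1 * (B a c x * pd b (B c a) x - B c a x * pd b (B a c) x)
+ B c a x * B a b x * B b c x - B c b x * B b a x * B a c x.

(* coefficients of the 3-form L = sum_{i,j,k distinct} L_{ijk} dxi_i^dxi_j^dxi_k *)
Definition Lcoef (i j k : 'I_n) : 'rV[R]_n -> R :=
  if distinct3 i j k then Lcal i j k else (fun _ => 0).

(* coefficients of dL = sum_{l,i,j,k} d_l L_{ijk} dxi_l^dxi_i^dxi_j^dxi_k *)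
Definition dLcoef (l i j k : 'I_n) : 'rV[R]_n -> R := pd l (Lcoef i j k).

Definition Gamma (a b c : 'I_n) (x : 'rV[R]_n) : R :=
  pd a (B b c) x - B b a x * B a c x.

End Defs.

Definition lab4 (n : nat) (a b c d : 'I_n) (k : 'I_4) : 'I_n := nth a [:: a; b; c; d] k.

(* Component of the 4-form sum_{i,j,k,l} C_{ijkl} dxi_i^dxi_j^dxi_k^dxi_l on
   dxi_a^dxi_b^dxi_c^dxi_d: the alternating sum of the coefficients.  Two such
   expressions define the same 4-form iff these components agree for all a,b,c,d. *)
Definition alt4 (R : realType) (n : nat) (C : 'I_n -> 'I_n -> 'I_n -> 'I_n -> R)
  (a b c d : 'I_n) : R :=
  \sum_(s : 'S_4) (-1) ^+ s *
    C (lab4 a b c d (s 0)) (lab4 a b c d (s 1)) (lab4 a b c d (s 2)) (lab4 a b c d (s 3)).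

Definition distinct_pos (t : 'I_4 * 'I_4 * 'I_4) : bool :=
  [&& t.1.1 != t.1.2, t.1.1 != t.2 & t.1.2 != t.2].

(* Main.v *)
Require Import Defs.
From HB Require Import structures.
From mathcomp Require Import all_boot all_order all_algebra all_fingroup.
From mathcomp Require Import all_classical all_reals all_analysis.
From mathcomp Require Import ring lra.
Set Implicit Arguments. Unset Strict Implicit. Unset Printing Implicit Defensive.
Import Order.TTheory GRing.Theory Num.Theory.
Import numFieldNormedType.Exports.
Local Open Scope ring_scope.
Lemma sum_perm_lift (R : zmodType) n (G : 'S_n.+1 -> R) :
  \sum_(s : 'S_n.+1) G s = \sum_(j < n.+1) \sum_(s : 'S_n) G (lift_perm ord0 j s).
Proof.
rewrite (partition_big (fun s : 'S_n.+1 => s ord0) xpredT) //=.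
apply: eq_bigr => j0 _.
rewrite (reindex (lift_perm ord0 j0)); last first.
  pose ulsf i (s : 'S_n.+1) k := odflt k (unlift (s i) (s (lift i k))).
  have ulsfK i (s : 'S_n.+1) k: lift (s i) (ulsf i s k) = s (lift i k).
    rewrite /ulsf; have:= neq_lift i k.
    by rewrite -(can_eq (permK s)) => /unlift_some[] ? ? ->.
  have inj_ulsf: injective (ulsf ord0 _).
    move=> s; apply: can_inj (ulsf (s ord0) s^-1%g) _ => k'.
    by rewrite {1}/ulsf ulsfK !permK liftK.
  exists (fun s => perm (inj_ulsf s)) => [s _ | s].
    by apply/permP=> k'; rewrite permE /ulsf lift_perm_lift lift_perm_id liftK.
  move/(s _ =P _) => si0; apply/permP=> k.
  case: (unliftP ord0 k) => [k'|] ->; rewrite ?lift_perm_id //.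
  by rewrite lift_perm_lift -si0 permE ulsfK.
by apply: eq_big => [s | s _] //; rewrite lift_perm_id eqxx.
Qed.

Lemma sum_perm1 (R : zmodType) (G : 'S_1 -> R) : \sum_(s : 'S_1) G s = G 1%g.
Proof.
rewrite (eq_bigr (fun=> G 1%g)); last first.
  by move=> s _; congr G; apply/permP => i; rewrite [LHS]ord1 [RHS]ord1.
by rewrite sumr_const card_Sn.
Qed.

Lemma alt4E (R : realType) n (C : 'I_n -> 'I_n -> 'I_n -> 'I_n -> R) a b c d :
  alt4 C a b c d =
    C a b c d - C a b d c - C a c b d + C a c d b + C a d b c - C a d c b
  - C b a c d + C b a d c + C b c a d - C b c d a - C b d a c + C b d c a
  + C c a b d - C c a d b - C c b a d + C c b d a + C c d a b - C c d b a
  - C d a b c + C d a c b + C d b a c - C d b c a - C d c a b + C d c b a.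
Proof.
rewrite /alt4.
have -> : (3 : 'I_4) = lift ord0 (lift ord0 (lift ord0 (ord0 : 'I_1))) by apply/val_inj.
have -> : (2 : 'I_4) = lift ord0 (lift ord0 (ord0 : 'I_2)) by apply/val_inj.
have -> : (1 : 'I_4) = lift ord0 ord0 by apply/val_inj.
have -> : (0 : 'I_4) = ord0 by apply/val_inj.
rewrite sum_perm_lift; apply: etrans; first (apply: eq_bigr => j _; rewrite sum_perm_lift; apply: eq_bigr => k _;
  rewrite sum_perm_lift; apply: eq_bigr => l _; rewrite sum_perm1; reflexivity).
rewrite /= !big_ord_recl !big_ord0 /=.
rewrite !odd_lift_perm !lift_perm_id ?lift_perm_lift ?lift_perm_id ?lift_perm_lift ?lift_perm_id ?lift_perm_lift ?perm1 /=.
rewrite ?odd_perm1 /lab4 /=. ring. Qed.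


Definition trip := ('I_4 * 'I_4 * 'I_4)%type.
Definition o0 : 'I_4 := @Ordinal 4 0 isT.
Definition o1 : 'I_4 := @Ordinal 4 1 isT.
Definition o2 : 'I_4 := @Ordinal 4 2 isT.
Definition o3 : 'I_4 := @Ordinal 4 3 isT.
Definition Lk : seq (trip * trip * bool) := [:: ((o0, o1, o2), (o3, o2, o1), true);
  ((o0, o1, o3), (o2, o3, o1), false);
  ((o0, o2, o1), (o3, o1, o2), false);
  ((o0, o2, o3), (o1, o3, o2), true);
  ((o0, o3, o1), (o2, o1, o3), true);
  ((o0, o3, o2), (o1, o2, o3), false);
  ((o1, o0, o2), (o3, o2, o0), false);
  ((o1, o0, o3), (o2, o3, o0), true);
  ((o1, o2, o0), (o3, o0, o2), true);
  ((o1, o3, o0), (o2, o0, o3), false);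
  ((o2, o0, o1), (o3, o1, o0), true);
  ((o2, o1, o0), (o3, o0, o1), false)].
Definition kap (t1 t2 : trip) : rat :=
  \sum_(p <- Lk) (if (t1 == p.1.1) && (t2 == p.1.2) then (if p.2 then -1 else 1) / 4 else 0).

Lemma Lk_ok : all (fun p => distinct_pos p.1.1 && distinct_pos p.1.2) Lk.
Proof. by []. Qed.

Lemma kappa_sum (R : realType) (G : trip -> R) :
  \sum_(t1 | distinct_pos t1) \sum_(t2 | distinct_pos t2)
     ratr (kap t1 t2) * G t1 * G t2 =
  \sum_(p <- Lk) ((if p.2 then -1 else 1) / 4) * G p.1.1 * G p.1.2.
Proof.
have H : forall t1 t2, ratr (kap t1 t2) * G t1 * G t2 =
   \sum_(p <- Lk) (if (t1 == p.1.1) && (t2 == p.1.2) then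
        ((if p.2 then -1 else 1) / 4) * G p.1.1 * G p.1.2 else 0).
  move=> t1 t2; rewrite /kap rmorph_sum /= !mulr_suml; apply: eq_bigr => p _.
  case: ifP => [/andP[/eqP -> /eqP ->]|_]; last by rewrite rmorph0 !mul0r.
  by case: (p.2); rewrite fmorph_div /= ?rmorphN rmorph1 ratr_nat.
under eq_bigr => t1 _ do under eq_bigr => t2 _ do rewrite H.
rewrite exchange_big /=; apply: etrans.
  apply: eq_bigr => t1 _; rewrite exchange_big; reflexivity.
rewrite exchange_big /=.
apply: eq_big_seq => p pLk.
have /andP[d1 d2] : distinct_pos p.1.1 && distinct_pos p.1.2.
  by move/allP: Lk_ok; apply.
rewrite (bigD1 p.1.2) //= (bigD1 p.1.1) //= !eqxx /=.
rewrite big1 ?addr0; last by move=> t /andP[_ /negbTE ->].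
rewrite big1 ?addr0 //; move=> t /andP[_ /negbTE ->].
by rewrite big1 // => t' _; rewrite andbF.
Qed.

Section C.
Variables (R : realType) (n : nat).
Notation V := 'rV[R]_n.

Lemma LL (g : V -> R) (y v : V) (t : R) : derivable g (y + t *: v) v ->
  is_derive t 1 (fun s : R => g (y + s *: v)) ('D_v g (y + t *: v)).
Proof.
move=> dg.
have E : (fun h : R => h^-1 *: (((fun s : R => g (y + s *: v)) \o shift t) (h *: 1) - g (y + t *: v)))
  = (fun h : R => h^-1 *: ((g \o shift (y + t *: v)) (h *: v) - g (y + t *: v))).
  apply/funext => h /=; congr (_ *: (g _ - _)).
  by rewrite [h *: 1]mulr1 scalerDl addrCA addrC.
split; first by rewrite /derivable E.
by rewrite /derive E.
Qed.

Lemma isdB (F1 F2 : R -> R) (t d1 d2 : R) : is_derive t 1 F1 d1 -> is_derive t 1 F2 d2 ->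
  is_derive t 1 (fun s => F1 s - F2 s) (d1 - d2).
Proof.
move=> [h1 e1] [h2 e2]; split; first exact: derivableB.
by rewrite deriveB // e1 e2.
Qed.

Lemma dir_norm (a : 'I_n) : `|dir R a| <= 1.
Proof.
rewrite [leLHS]/Num.norm /= mx_normrE.
apply: bigmax_le => // ij _; rewrite /dir mxE; case: (_ == _); rewrite ?normr1 ?normr0 //.
Qed.

Definition Delta (f : V -> R) (x : V) (a d : 'I_n) (h : R) :=
  f (x + h *: dir R d + h *: dir R a) - f (x + h *: dir R a) - f (x + h *: dir R d) + f x.

Lemma aux4 (A A' B C D : R) : A = A' -> A - B - C + D = A' - C - B + D.
Proof. by move=> ->; ring. Qed.

Lemma Delta_sym f x a d h : Delta f x a d h = Delta f x d a h.
Proof. by rewrite /Delta; apply: aux4; congr f; rewrite addrAC. Qed.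

Lemma nbd (x : V) (a d : 'I_n) (s t : R) :
  `|x - (x + s *: dir R a + t *: dir R d)| <= `|s| + `|t|.
Proof.
rewrite -addrA opprD addrA subrr add0r normrN.
apply: (le_trans (ler_normD _ _)); rewrite !normrZ.
by apply: lerD; rewrite -[X in _ <= X]mulr1; apply: ler_wpM2l => //; apply: dir_norm.
Qed.

Lemma half (f : V -> R) (a d : 'I_n) (x : V) (h : R) :
  (forall y, derivable f y (dir R a)) ->
  (forall y, derivable (pd a f) y (dir R d)) ->
  0 < h -> exists p : V, `|x - p| < h * 2 /\
   Delta f x a d h = h * h * pd d (pd a f) p.
Proof.
move=> df dfa h0.
set u := dir R a; set w := dir R d.
pose F := fun s : R => f ((x + h *: w) + s *: u) - f (x + s *: u).
pose dF := fun s : R => pd a f (x + h *: w + s *: u) - pd a f (x + s *: u).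
have DF : forall s : R, is_derive s 1 F (dF s).
  by move=> s; apply: isdB; apply: LL; apply: df.
have [s1 s1in E1] : exists2 c, c \in `]0, h[%R & F h - F 0 = dF c * (h - 0).
  apply: (@MVT R F dF 0 h h0); first [ (move=> s sin; exact: DF) | (apply: derivable_within_continuous => s sin; by case: (DF s)) ].
pose G := fun t : R => pd a f ((x + s1 *: u) + t *: w).
pose dG := fun t : R => pd d (pd a f) ((x + s1 *: u) + t *: w).
have DG : forall t : R, is_derive t 1 G (dG t).
  by move=> t; apply: LL; apply: dfa.
have [t1 t1in E2] : exists2 c, c \in `]0, h[%R & G h - G 0 = dG c * (h - 0).
  apply: (@MVT R G dG 0 h h0); first [ (move=> t tin; exact: DG) | (apply: derivable_within_continuous => t tin; by case: (DG t)) ].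
exists (x + s1 *: u + t1 *: w); split.
  move: s1in t1in; rewrite !in_itv /= => /andP[s10 s1h] /andP[t10 t1h].
  apply: (le_lt_trans (nbd _ _ _ _ _)); rewrite !gtr0_norm //; lra.
have eF : Delta f x a d h = F h - F 0.
  by rewrite /Delta /F !scale0r !addr0; ring.
have eD : dF s1 = G h - G 0 by rewrite /dF /G scale0r addr0 (addrAC x).
by rewrite eF E1 eD E2 /dG subr0; ring.
Qed.



Lemma contra3 (z1 z2 w : R) : `|z1 - w| < `|z1 - z2| / 2 -> `|z2 - w| < `|z1 - z2| / 2 -> False.
Proof.
move=> h1 h2.
have : `|z1 - z2| <= `|z1 - w| + `|z2 - w|.
  have -> : z1 - z2 = (z1 - w) - (z2 - w) by ring.
  exact: ler_normB.
lra.
Qed.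

Lemma clairaut (f : V -> R) (a d : 'I_n) (x : V) : smooth f ->
  pd d (pd a f) x = pd a (pd d f) x.
Proof.
move=> sf.
have [df _] := sf [::]; have [dfa _] := sf [:: a]; have [dfd _] := sf [:: d].
have [_ c12] := sf [:: d; a]; have [_ c21] := sf [:: a; d].
rewrite /= in df dfa dfd c12 c21.
apply/eqP; rewrite -subr_eq0; apply/negPn/negP => hz.
set z := _ - _ in hz.
have e0 : 0 < `|z| / 2 by rewrite divr_gt0 // normr_gt0.
have := cvgr_dist_lt _ _ (c12 x) _ e0; move=> /(_ _) /(proj1 (nbhs_normP _ _)) [r1 r10 H1].
have := cvgr_dist_lt _ _ (c21 x) _ e0; move=> /(_ _) /(proj1 (nbhs_normP _ _)) [r2 r20 H2].
pose h := Num.min r1 r2 / 4.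
have h0 : 0 < h by rewrite divr_gt0 // lt_min r10 r20.
have hr1 : h * 2 < r1.
  rewrite /h.
  have : Num.min r1 r2 <= r1 by rewrite ge_min lexx.
  have : 0 < Num.min r1 r2 by rewrite lt_min r10 r20.
  move=> m0 m1; lra.
have hr2 : h * 2 < r2.
  rewrite /h.
  have : Num.min r1 r2 <= r2 by rewrite ge_min lexx orbT.
  have : 0 < Num.min r1 r2 by rewrite lt_min r10 r20.
  move=> m0 m1; lra.
have [p1 [Hp1 E1]] := half x (fun y => df y a) (fun y => dfa y d) h0.
have [p2 [Hp2 E2]] := half x (fun y => df y d) (fun y => dfd y a) h0.
have hnz : h * h != 0 by rewrite mulf_neq0 // gt_eqF.
have E := mulfI hnz (etrans (esym E1) (etrans (Delta_sym f x a d h) E2)).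
have Hb1 : `|x - p1| < r1 := lt_trans Hp1 hr1.
have Hb2 : `|x - p2| < r2 := lt_trans Hp2 hr2.
have A1 := H1 _ Hb1.
have A2 := H2 _ Hb2.
rewrite /= E in A1.
exact: (contra3 A1 A2).
Qed.
End C.

Section S.
Variables (R : realType) (n : nat).
Implicit Types (f g : 'rV[R]_n -> R).
Definition dv f := forall y (l : 'I_n), derivable f y (dir R l).

Lemma dvD f g : dv f -> dv g -> dv (fun y => f y + g y).
Proof. by move=> hf hg y l; apply: derivableD. Qed.
Lemma dvN f : dv f -> dv (fun y => - f y).
Proof. by move=> hf y l; apply: derivableN. Qed.
Lemma dvM f g : dv f -> dv g -> dv (fun y => f y * g y).
Proof. by move=> hf hg y l; apply: derivableM. Qed.
Lemma dvC (k : R) : dv (fun _ => k).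
Proof. by move=> y l; apply: derivable_cst. Qed.

Lemma pdD f g l x : dv f -> dv g -> pd l (fun y => f y + g y) x = pd l f x + pd l g x.
Proof. by move=> hf hg; rewrite /pd; apply: deriveD. Qed.
Lemma pdN f l x : dv f -> pd l (fun y => - f y) x = - pd l f x.
Proof. by move=> hf; rewrite /pd; apply: deriveN. Qed.
Lemma pdM f g l x : dv f -> dv g -> pd l (fun y => f y * g y) x = pd l f x * g x + f x * pd l g x.
Proof. by move=> hf hg; rewrite /pd deriveM // addrC mulrC. Qed.
Lemma pdMC (k : R) f l x : dv f -> pd l (fun y => k * f y) x = k * pd l f x.
Proof. by move=> hf; rewrite /pd; apply: deriveMl. Qed.
Lemma pdC (k : R) (l : 'I_n) x : pd l (fun _ => k) x = 0.
Proof. by rewrite /pd; apply: derive_cst. Qed.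

Variable B : 'I_n -> 'I_n -> 'rV[R]_n -> R.
Hypothesis Bs : forall i j : 'I_n, i != j -> smooth (B i j).

Lemma dvB0 i j : i != j -> dv (B i j).
Proof. by move=> /Bs /(_ [::]) [h _]. Qed.
Lemma dvB1 i j k : i != j -> dv (pd k (B i j)).
Proof. by move=> /Bs /(_ [:: k]) [h _]. Qed.

Ltac solve_dv :=
  lazymatch goal with
  | |- dv (fun _ => ?k) => exact: dvC
  | |- dv (fun y => _ + _) => apply: dvD; solve_dv
  | |- dv (fun y => - _) => apply: dvN; solve_dv
  | |- dv (fun y => _ * _) => apply: dvM; solve_dv
  | |- dv (fun y => pd ?k (B ?i ?j) y) => apply: dvB1; assumption
  | |- dv (pd ?k (B ?i ?j)) => apply: dvB1; assumption
  | |- dv (fun y => B ?i ?j y) => apply: dvB0; assumption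
  | |- dv (B ?i ?j) => apply: dvB0; assumption
  end.


Opaque derive.
Lemma pdLcal a b c l x : a != b -> a != c -> b != c -> b != a -> c != a -> c != b ->
  pd l (Lcal B a b c) x =
 2^-1 * (pd l (B c b) x * pd a (B b c) x + B c b x * pd l (pd a (B b c)) x - (pd l (B b c) x * pd a (B c b) x + B b c x * pd l (pd a (B c b)) x))
 + 2^-1 * (pd l (B b a) x * pd c (B a b) x + B b a x * pd l (pd c (B a b)) x - (pd l (B a b) x * pd c (B b a) x + B a b x * pd l (pd c (B b a)) x))
 + 2^-1 * (pd l (B a c) x * pd b (B c a) x + B a c x * pd l (pd b (B c a)) x - (pd l (B c a) x * pd b (B a c) x + B c a x * pd l (pd b (B a c)) x))
 + ((pd l (B c a) x * B a b x + B c a x * pd l (B a b) x) * B b c x + B c a x * B a b x * pd l (B b c) x)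
 - ((pd l (B c b) x * B b a x + B c b x * pd l (B b a) x) * B a c x + B c b x * B b a x * pd l (B a c) x).
Proof.
move=> *.
rewrite /Lcal !pdD; try solve_dv.
rewrite !pdMC; try solve_dv.
rewrite pdN; try solve_dv.
rewrite !pdM; try solve_dv.
rewrite !pdD; try solve_dv.
rewrite !pdN; try solve_dv.
rewrite !pdM; try solve_dv.
reflexivity.
Qed.

Lemma core a b c d x : distinct4 a b c d ->
  alt4 (fun i j k l => dLcoef B i j k l x) a b c d =
  6 * (- Gamma B a b c x * Gamma B d c b x + Gamma B a b d x * Gamma B c d b x + Gamma B a c b x * Gamma B d b c x - Gamma B a c d x * Gamma B b d c x - Gamma B a d b x * Gamma B c b d x + Gamma B a d c x * Gamma B b c d x + Gamma B b a c x * Gamma B d c a x - Gamma B b a d x * Gamma B c d a x - Gamma B b c a x * Gamma B d a c x + Gamma B b d a x * Gamma B c a d x - Gamma B c a b x * Gamma B d b a x + Gamma B c b a x * Gamma B d a b x).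
Proof.
move=> D.
case/and4P: D => /and3P [ab ac bc] ad bd cd.
have ba : b != a by rewrite eq_sym.
have ca : c != a by rewrite eq_sym.
have cb : c != b by rewrite eq_sym.
have da : d != a by rewrite eq_sym.
have db : d != b by rewrite eq_sym.
have dc : d != c by rewrite eq_sym.
rewrite alt4E /dLcoef /Lcoef /distinct3 ?(negbTE ab) ?(negbTE ac) ?(negbTE ad) ?(negbTE ba) ?(negbTE bc) ?(negbTE bd) ?(negbTE ca) ?(negbTE cb) ?(negbTE cd) ?(negbTE da) ?(negbTE db) ?(negbTE dc) /=.
rewrite !pdLcal //.
move: (clairaut c d x (Bs ab)) (clairaut b d x (Bs ac)) (clairaut b c x (Bs ad)) (clairaut c d x (Bs ba)) (clairaut a d x (Bs bc)) (clairaut a c x (Bs bd)) (clairaut b d x (Bs ca)) (clairaut a d x (Bs cb)) (clairaut a b x (Bs cd)) (clairaut b c x (Bs da)) (clairaut a c x (Bs db)) (clairaut a b x (Bs dc)).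
rewrite /Gamma.
repeat match goal with |- context [pd ?i (pd ?j (B ?k ?l)) x] => generalize (pd i (pd j (B k l)) x); intro end.
repeat match goal with |- context [pd ?i (B ?k ?l) x] => generalize (pd i (B k l) x); intro end.
repeat match goal with |- context [B ?k ?l x] => generalize (B k l x); intro end.
move=> e0 e1 e2 e3 e4 e5 e6 e7 e8 e9 e10 e11.
rewrite e0 e1 e2 e3 e4 e5 e6 e7 e8 e9 e10 e11.
field.
all: by [].
Qed.
End S.

Definition Qf (R : realType) n (B : 'I_n -> 'I_n -> 'rV[R]_n -> R) (i j k l : 'I_n) (x : 'rV[R]_n) : R :=
  \sum_(t1 | distinct_pos t1) \sum_(t2 | distinct_pos t2)
             ratr (kap t1 t2) *
             Gamma B (lab4 i j k l t1.1.1) (lab4 i j k l t1.1.2) (lab4 i j k l t1.2) x *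
             Gamma B (lab4 i j k l t2.1.1) (lab4 i j k l t2.1.2) (lab4 i j k l t2.2) x.

Lemma Qf_expl (R : realType) n (B : 'I_n -> 'I_n -> 'rV[R]_n -> R) a b c d x :
  Qf B a b c d x = 4^-1 * (- Gamma B a b c x * Gamma B d c b x + Gamma B a b d x * Gamma B c d b x + Gamma B a c b x * Gamma B d b c x - Gamma B a c d x * Gamma B b d c x - Gamma B a d b x * Gamma B c b d x + Gamma B a d c x * Gamma B b c d x + Gamma B b a c x * Gamma B d c a x - Gamma B b a d x * Gamma B c d a x - Gamma B b c a x * Gamma B d a c x + Gamma B b d a x * Gamma B c a d x - Gamma B c a b x * Gamma B d b a x + Gamma B c b a x * Gamma B d a b x).
Proof.
rewrite /Qf (kappa_sum (fun t => Gamma B (lab4 a b c d t.1.1) (lab4 a b c d t.1.2) (lab4 a b c d t.2) x)).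
rewrite /Lk !big_cons big_nil /=.
field.
all: by [].
Qed.

Lemma nd4 n (a b c d : 'I_n) : distinct4 a b c d = false ->
  a = b \/ a = c \/ a = d \/ b = c \/ b = d \/ c = d.
Proof.
move=> H.
have [?|ab] := eqVneq a b; first by left.
have [?|ac] := eqVneq a c; first by right; left.
have [?|ad] := eqVneq a d; first by do 2 right; left.
have [?|bc] := eqVneq b c; first by do 3 right; left.
have [?|bd] := eqVneq b d; first by do 4 right; left.
have [?|cd] := eqVneq c d; first by do 5 right.
by rewrite /distinct4 /distinct3 ab ac ad bc bd cd in H.
Qed.

Theorem corollary2p3 :
  exists kappa : 'I_4 * 'I_4 * 'I_4 -> 'I_4 * 'I_4 * 'I_4 -> rat,
  forall (R : realType) (n : nat) (B : 'I_n -> 'I_n -> 'rV[R]_n -> R),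
    (forall i j : 'I_n, i != j -> smooth (B i j)) ->
    (exists A : 'I_n -> 'I_n -> 'I_n -> 'I_n -> 'rV[R]_n -> R,
       (forall (x : 'rV[R]_n) (a b c d : 'I_n),
          alt4 (fun i j k l => dLcoef B i j k l x) a b c d
          = alt4 (fun i j k l => A i j k l x) a b c d) /\
       (forall a b c d : 'I_n, distinct4 a b c d -> forall x : 'rV[R]_n,
          A a b c d x =
          \sum_(t1 | distinct_pos t1) \sum_(t2 | distinct_pos t2)
             ratr (kappa t1 t2) *
             Gamma B (lab4 a b c d t1.1.1) (lab4 a b c d t1.1.2) (lab4 a b c d t1.2) x *
             Gamma B (lab4 a b c d t2.1.1) (lab4 a b c d t2.1.2) (lab4 a b c d t2.2) x)) /\
    ((forall (x : 'rV[R]_n) (a b c : 'I_n), distinct3 a b c ->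
        pd a (B b c) x = B b a x * B a c x) ->
     forall (x : 'rV[R]_n) (a b c d : 'I_n),
       alt4 (fun i j k l => dLcoef B i j k l x) a b c d = 0).
Proof.
exists kap => R n B Bs.
split.
  exists (fun i j k l x => if distinct4 i j k l then Qf B i j k l x else dLcoef B i j k l x).
  split.
    move=> x a b c d.
    case D: (distinct4 a b c d).
      rewrite (core Bs x D) alt4E.
      case/and4P: D => /and3P [ab ac bc] ad bd cd.
have ba : b != a by rewrite eq_sym.
have ca : c != a by rewrite eq_sym.
have cb : c != b by rewrite eq_sym.
have da : d != a by rewrite eq_sym.
have db : d != b by rewrite eq_sym.
have dc : d != c by rewrite eq_sym.
      rewrite /distinct4 /distinct3 ?(negbTE ab) ?(negbTE ac) ?(negbTE ad) ?(negbTE ba) ?(negbTE bc) ?(negbTE bd) ?(negbTE ca) ?(negbTE cb) ?(negbTE cd) ?(negbTE da) ?(negbTE db) ?(negbTE dc) /=.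
      rewrite !Qf_expl.
      by field.
    case: (nd4 D) => [E|[E|[E|[E|[E|E]]]]]; subst; rewrite !alt4E /= /distinct4 /distinct3 !eqxx /= ?andbF /=; by [].
  by move=> a b c d D x /=; rewrite D.
move=> H x a b c d.
case D: (distinct4 a b c d).
  rewrite (core Bs x D).
  case/and4P: D => /and3P [ab ac bc] ad bd cd.
have ba : b != a by rewrite eq_sym.
have ca : c != a by rewrite eq_sym.
have cb : c != b by rewrite eq_sym.
have da : d != a by rewrite eq_sym.
have db : d != b by rewrite eq_sym.
have dc : d != c by rewrite eq_sym.
  have GZ : forall p q r, p != q -> p != r -> q != r -> Gamma B p q r x = 0.
    by move=> p q r hpq hpr hqr; rewrite /Gamma H ?subrr // /distinct3 hpq hpr hqr.
  rewrite !GZ //.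
  ring.
case: (nd4 D) => [E|[E|[E|[E|[E|E]]]]]; subst; rewrite alt4E /=; ring.
Qed.
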